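(* Let $N\ge 2$ be an integer and index rows and columns of $N\times N$ matrices by $0,1,\dots,N-1$. Let $H_{BH}$ be the complex symmetric tridiagonal matrix with $(H_{BH})_{n,n}={\rm i}(2n-N+1)$ and $(H_{BH})_{n-1,n}=(H_{BH})_{n,n-1}=\sqrt{n(N-n)}$ ($n=1,\dots,N-1$), and let $H_{AO}$ be the real tridiagonal matrix with $(H_{AO})_{n,n}=2n-N+1$, $(H_{AO})_{n-1,n}=\sqrt{n(N-n)}$, $(H_{AO})_{n,n-1}=-\sqrt{n(N-n)}$ ($n=1,\dots,N-1$), all other entries being zero. Let $\beta=-1+{\rm i}$ and define diagonal matrices $B_{n,n}=(-\beta)^{-n}$, $A_{n,n}=\beta^n$, and the upper triangular real matrix $R$ with entries $$R_{n,n+q}=\sqrt{\binom{n+q}{n}\binom{N-1-n}{q}},\qquad n=0,\dots,N-1,\ q=0,\dots,N-1-n,$$ and $R_{n,m}=0$ for $m<n$. Put $S=B\,R\,A$. Then $S$ is invertible, $H_{AO}=S\,H_{BH}\,S^{-1}$, and moreover $S=Q_{AO}\,Q_{BH}^{-1}$, where $Q_{BH}=D P G$ and $Q_{AO}=C P F$ with $P_{m,q}=\binom{N-1-m}{q}$, $D_{n,n}={\rm i}^n\sqrt{\binom{N-1}{n}}$, $G_{n,n}=(-{\rm i})^{N-n-1}(N-1-n)!$, $C_{n,n}=\sqrt{\binom{N-1}{n}}$, $F_{n,n}=(-1)^{N-n-1}(N-1-n)!$ (diagonal matrices; $\binom{a}{b}=0$ for $b>a$).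
   Context: $H_{BH}$ is the Bose–Hubbard Hamiltonian at its exceptional point $z=1$ and $H_{AO}$ the anharmonic-oscillator Hamiltonian at its exceptional point $\lambda=0$; $Q_{BH}$, $Q_{AO}$ are the transition matrices satisfying $H_{BH}Q_{BH}=Q_{BH}J$ and $H_{AO}Q_{AO}=Q_{AO}J$, where $J$ is the $N\times N$ nilpotent Jordan block ($J_{n,n+1}=1$, other entries zero). *)

(* Defs.v *)
From HB Require Import structures.
From mathcomp Require Import all_boot all_order all_algebra all_field.
Set Implicit Arguments. Unset Strict Implicit. Unset Printing Implicit Defensive.
Import Order.TTheory GRing.Theory Num.Theory.
Local Open Scope ring_scope.

Definition H_BH (N : nat) : 'M[algC]_N :=
  \matrix_(i < N, j < N)
    if i == j :> nat then 'i * ((2 * i + 1)%:R - N%:R)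
    else if j == i.+1 :> nat then sqrtC ((j * (N - j))%:R)
    else if i == j.+1 :> nat then sqrtC ((i * (N - i))%:R)
    else 0.

Definition H_AO (N : nat) : 'M[algC]_N :=
  \matrix_(i < N, j < N)
    if i == j :> nat then ((2 * i + 1)%:R - N%:R)
    else if j == i.+1 :> nat then sqrtC ((j * (N - j))%:R)
    else if i == j.+1 :> nat then - sqrtC ((i * (N - i))%:R)
    else 0.

Definition beta : algC := -1 + 'i.

Definition Bmx (N : nat) : 'M[algC]_N :=
  \matrix_(i < N, j < N) if i == j then (- beta) ^- i else 0.

Definition Amx (N : nat) : 'M[algC]_N :=
  \matrix_(i < N, j < N) if i == j then beta ^+ i else 0.

Definition Rmx (N : nat) : 'M[algC]_N :=
  \matrix_(i < N, j < N)
    if (i <= j)%N then sqrtC (('C(j, i) * 'C(N.-1 - i, j - i))%:R) else 0.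

Definition Smx (N : nat) : 'M[algC]_N := Bmx N *m Rmx N *m Amx N.

Definition Pmx (N : nat) : 'M[algC]_N :=
  \matrix_(m < N, q < N) ('C(N.-1 - m, q))%:R.

Definition Dmx (N : nat) : 'M[algC]_N :=
  \matrix_(i < N, j < N) if i == j then 'i ^+ i * sqrtC ('C(N.-1, i))%:R else 0.

Definition Gmx (N : nat) : 'M[algC]_N :=
  \matrix_(i < N, j < N)
    if i == j then (- 'i) ^+ (N - i - 1) * ((N.-1 - i)`!)%:R else 0.

Definition Cmx (N : nat) : 'M[algC]_N :=
  \matrix_(i < N, j < N) if i == j then sqrtC ('C(N.-1, i))%:R else 0.

Definition Fmx (N : nat) : 'M[algC]_N :=
  \matrix_(i < N, j < N)
    if i == j then (-1) ^+ (N - i - 1) * ((N.-1 - i)`!)%:R else 0.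

Definition Q_BH (N : nat) : 'M[algC]_N := Dmx N *m Pmx N *m Gmx N.
Definition Q_AO (N : nat) : 'M[algC]_N := Cmx N *m Pmx N *m Fmx N.

(* Main.v *)
Require Import Defs.
From mathcomp Require Import all_boot all_order all_algebra all_field.
From mathcomp Require Import ring zify fingroup perm.
Import GRing.Theory Num.Theory.
Local Open Scope ring_scope.

Lemma trin n k i : (i <= k)%N -> (k <= n)%N ->
  ('C(n,k) * 'C(k,i) = 'C(n,i) * 'C(n-i,k-i))%N.
Proof.
move=> hik hkn.
have hpos : (0 < i`! * (k-i)`! * (n-k)`!)%N by rewrite !muln_gt0 !fact_gt0.
apply/eqP; rewrite -(eqn_pmul2r hpos); apply/eqP.
have e1 := bin_fact hik. have e2 := bin_fact hkn.
have hin : (i <= n)%N by apply: leq_trans hkn.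
have e3 := bin_fact hin.
have hki : (k - i <= n - i)%N by apply: leq_sub2r.
have e4 := bin_fact hki.
have ee : (n - i - (k - i) = n - k)%N by lia.
rewrite ee in e4.
transitivity ('C(n,k) * ('C(k,i) * (i`! * (k-i)`!)) * (n-k)`!)%N; first by nia.
rewrite e1 -mulnA e2.
rewrite -e3 -e4; nia.
Qed.

Lemma swapC m t q : ('C(m,t) * 'C(m-t,q) = 'C(m,q) * 'C(m-q,t))%N.
Proof.
case: (leqP (t+q) m) => h.
  have h1 := @trin m (t+q) t (leq_addr q t) h.
  have h2 := @trin m (t+q) q (leq_addl t q) h.
  have e1 : (t + q - t = q)%N by lia.
  have e2 : (t + q - q = t)%N by lia.
  rewrite e1 in h1; rewrite e2 in h2.
  rewrite -h1 -h2; congr (_ * _)%N.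
  by rewrite -(bin_sub (leq_addl t q)) e2.
case: (leqP t m) => htm.
  rewrite (@bin_small (m-t) q); last by lia.
  case: (leqP q m) => hqm.
    by rewrite (@bin_small (m-q) t) ?muln0 //; lia.
  by rewrite (@bin_small m q hqm) muln0 mul0n.
by rewrite (@bin_small m t htm) mul0n (@bin_small (m-q) t) ?muln0 //; lia.
Qed.

Lemma quad n i t q : (i <= n)%N ->
  ('C(t+i,i) * 'C(n,t+i) * 'C(n-(t+i),q) = 'C(n,i) * 'C(n-i,q) * 'C(n-i-q,t))%N.
Proof.
move=> hin.
case: (leqP (t+i) n) => h.
  have := @trin n (t+i) i (leq_addl t i) h.
  have -> : (t + i - i = t)%N by lia.
  have -> : (n - (t+i) = n - i - t)%N by lia.
  move=> e. rewrite [('C(t+i,i) * _)%N]mulnC e -!mulnA swapC //.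
rewrite (@bin_small n (t+i)) // (@bin_small (n-i-q) t) ?muln0 ?mul0n //; lia.
Qed.

Lemma sum2 (x : algC) n i q : (i <= n)%N ->
  \sum_(k < n.+1) ('C(k,i) * 'C(n,k) * 'C(n-k,q))%:R * x^+k =
  ('C(n,i) * 'C(n-i,q))%:R * x^+i * (x+1)^+(n-i-q).
Proof.
move=> hin.
rewrite -(big_mkord xpredT (fun k => ('C(k,i) * 'C(n,k) * 'C(n-k,q))%:R * x^+k)).
rewrite (@big_cat_nat _ _ _ i 0 n.+1) /=; [|by []|by lia].
rewrite big_nat_cond big1 ?add0r; last first.
  by move=> k /andP[/andP[_ hk] _]; rewrite bin_small // !mul0n mul0r.
rewrite -{1}(add0n i) big_addn.
have -> : (n.+1 - i = (n - i).+1)%N by lia.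
under eq_bigr => t _ do rewrite quad // natrM exprD.
rewrite exprD1n big_mkord.
rewrite (big_ord_widen (n-i).+1 (fun t => x ^+ t *+ 'C(n - i - q, t))); last by lia.
rewrite mulr_sumr [RHS]big_mkcond /=; apply: eq_bigr => t _.
case: ifP => ht; first by rewrite mulr_natl; ring.
rewrite (@bin_small (n-i-q) t) ?mulr0n ?mulr0 ?mul0r //; move: ht; rewrite ltnS => /negbT; rewrite -ltnNge; exact.
Qed.

Lemma sum_delta N a (c : algC) :
  \sum_(k < N) (((k : nat) == a)%:R * c) = if (a < N)%N then c else 0.
Proof.
case: ifP => ha.
  rewrite (bigD1 (Ordinal ha)) //= eqxx mul1r big1 ?addr0 // => k hk.
  have -> : (k == a :> nat) = false.
    by apply/negbTE; apply: contra hk => /eqP e; apply/eqP; apply: val_inj.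
  by rewrite mul0r.
rewrite big1 // => k _.
have -> : (k == a :> nat) = false by have := ltn_ord k; lia.
by rewrite mul0r.
Qed.

Lemma tri_sum N (F : nat -> algC) i : (i < N)%N ->
  (forall k, (k < N)%N -> k != i -> k != i.+1 -> k.+1 != i -> F k = 0) ->
  (i.+1 = N -> F i.+1 = 0) ->
  \sum_(k < N) F k = (if i is i'.+1 then F i' else 0) + F i + F i.+1.
Proof.
move=> hi hF hN.
transitivity (\sum_(k < N) ((((k:nat) == i.-1) && (0 < i)%N)%:R * F i.-1 + ((k:nat) == i)%:R * F i
   + ((k:nat) == i.+1)%:R * F i.+1)).
  apply: eq_bigr => k _.
  case: k => k hk /=.
  have [->|ki] := eqVneq k i.
    have -> : ((i == i.-1) && (0 < i)%N) = false by lia.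
    have -> : (i == i.+1) = false by lia.
    by rewrite ?eqxx /= ?mulr0n ?mulr1n ?mul0r ?mul1r ?add0r ?addr0.
  have [e|ki1] := eqVneq k i.+1.
    have -> : ((k == i.-1) && (0 < i)%N) = false by lia.
    by rewrite e ?eqxx ?(negbTE ki) /= ?mulr0n ?mulr1n ?mul0r ?mul1r ?add0r ?addr0.
  case: (boolP ((k == i.-1) && (0 < i)%N)) => h.
    have e : k = i.-1 :> nat by lia.
    by rewrite ?(negbTE ki) ?(negbTE ki1) /= ?mulr0n ?mulr1n ?mul0r ?mul1r ?add0r ?addr0 e.
  rewrite hF //; last by lia.
  by rewrite ?(negbTE ki) ?(negbTE ki1) /= ?mulr0n ?mulr1n ?mul0r ?mul1r ?add0r ?addr0.
rewrite !big_split /= !sum_delta.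
have -> : (i < N)%N = true by [].
case: i hi hF hN => [|i'] hi hF hN /=.
  rewrite big1 ?add0r; last by move=> k _; rewrite andbF mul0r.
  by case: ltnP => h; [|rewrite hN //; lia].
rewrite (eq_bigr (fun k : 'I_N => ((k:nat) == i')%:R * F i')); last by move=> k _; rewrite andbT.
rewrite sum_delta.
have -> : (i' < N)%N = true by lia.
by case: ltnP => h; [|rewrite hN //; lia].
Qed.

Lemma alg1 (b I J Nn x y z w v : algC) : b != 0 -> b^+2 + 2*b + 2 = 0 ->
  (I+1)*z = (J-I)*x -> J*w = (J-I)*x -> v = x + y -> I*x = (J-I+1)*y ->
  (Nn - I) * b * y + ((2*I+1) - Nn) * x + (I+1) * (-b)^-1 * z =
  b^-1 * J * w + x * ((b+1) * ((2*J+1) - Nn)) + v * b * (Nn - J - 1).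
Proof.
move=> hb hb2 h1 h2 h3 h4.
apply/eqP; rewrite -subr_eq0; apply/eqP.
have -> : (Nn - I) * b * y + ((2*I+1) - Nn) * x + (I+1) * (-b)^-1 * z -
  (b^-1 * J * w + x * ((b+1) * ((2*J+1) - Nn)) + v * b * (Nn - J - 1)) =
  (-b)^-1 * ((I+1)*z - (J-I)*x) - b^-1 * (J*w - (J-I)*x) - (Nn-J-1)*b*(v-x-y)
  + b*((J-I+1)*y - I*x) + x*(I-J)*b^-1*(b^+2+2*b+2).
  by field; rewrite ?oppr_eq0 hb.
by rewrite h1 h2 h3 h4 hb2 !subrr; ring.
Qed.

Lemma sqC (a b c d : nat) : (a * b = c * c * d)%N ->
  sqrtC a%:R * sqrtC b%:R = c%:R * sqrtC d%:R :> algC.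
Proof.
move=> e.
have hM : forall p q : nat, sqrtC (p%:R * q%:R) = sqrtC p%:R * sqrtC q%:R :> algC.
  by move=> p q; apply: sqrtCM; rewrite qualifE /= ler0n.
rewrite -hM -natrM e natrM hM natrM -expr2 sqrCK // ler0n.
Qed.

Definition cc N k : algC := sqrtC ('C(N.-1,k))%:R.
Definition Kd N : 'M[algC]_N := diag_mx (\row_(k < N) cc N k).
Definition Ki N : 'M[algC]_N := diag_mx (\row_(k < N) (cc N k)^-1).
Definition uu : algC := (- beta)^-1.
Definition Mm N : 'M[algC]_N :=
  \matrix_(i < N, j < N) (uu ^+ i * ('C(j,i))%:R * beta ^+ j).
Definition dd N (i : nat) : algC := ((2 * i + 1)%:R - N%:R).
Definition hAf N (r c : nat) : algC :=
  if c == r then dd N r else if c == r.+1 then c%:R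
  else if r == c.+1 then - (N - r)%:R else 0.
Definition hBf N (r c : nat) : algC :=
  if c == r then 'i * dd N r else if c == r.+1 then c%:R
  else if r == c.+1 then (N - r)%:R else 0.
Definition hAm N : 'M[algC]_N := \matrix_(i < N, j < N) hAf N i j.
Definition hBm N : 'M[algC]_N := \matrix_(i < N, j < N) hBf N i j.

Lemma cc_neq0 N k : (k < N)%N -> cc N k != 0.
Proof.
move=> hk; rewrite /cc sqrtC_eq0 pnatr_eq0 -lt0n bin_gt0; lia.
Qed.

Lemma diagE N (f : nat -> algC) :
  \matrix_(i < N, j < N) (if i == j then f i else 0) = diag_mx (\row_(i < N) f i).
Proof.
apply/matrixP => i j; rewrite !mxE.
by case: eqP => [->|]; rewrite ?mulr1n ?mulr0n.
Qed.

Lemma KdKi N : Kd N *m Ki N = 1%:M.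
Proof.
apply/matrixP => i j; rewrite /Kd /Ki mul_diag_mx !mxE.
case: eqP => [->|]; rewrite ?mulr1n ?mulr0n ?mulr0 //.
by rewrite mulfV // cc_neq0.
Qed.

Lemma S_eq N : Smx N = Ki N *m Mm N *m Kd N.
Proof.
rewrite /Smx.
have -> : Bmx N = diag_mx (\row_(i < N) (-beta)^- i) :=
  diagE N (fun i : nat => (-beta)^- i).
have -> : Amx N = diag_mx (\row_(i < N) beta ^+ i) :=
  diagE N (fun i : nat => beta ^+ i).
rewrite /Ki /Kd !mul_diag_mx !mul_mx_diag.
apply/matrixP => i j; rewrite !mxE.
have hi := ltn_ord i; have hj := ltn_ord j.
rewrite /uu exprVn.
case: leqP => hij; last first.
  by rewrite bin_small // mulr0 mul0r !mulr0 mul0r.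
have e : ('C(N.-1, i) * ('C(j, i) * 'C(N.-1 - i, j - i)) =
   'C(j, i) * 'C(j, i) * 'C(N.-1, j))%N.
  have := @trin N.-1 j i hij (ltac:(lia)).
  move=> t; rewrite mulnCA -t. nia.
have := @sqC _ _ _ _ e; rewrite -/(cc N i) -/(cc N j) => h.
have -> : sqrtC ('C(j, i) * 'C(N.-1 - i, j - i))%:R =
   (cc N i)^-1 * ('C(j,i))%:R * cc N j.
  by rewrite -mulrA -h mulKf // cc_neq0.
rewrite /cc; ring.
Qed.

Lemma sq_up N i : (i.+1 < N)%N ->
  cc N i * sqrtC ((i.+1 * (N - i.+1))%:R) = (i.+1)%:R * cc N i.+1.
Proof.
move=> h; apply: sqC.
have t := mul_bin_left N.-1 i.
have -> : (N - i.+1 = N.-1 - i)%N by lia.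
nia.
Qed.

Lemma sq_dn N j : (j.+1 < N)%N ->
  cc N j.+1 * sqrtC ((j.+1 * (N - j.+1))%:R) = (N - j.+1)%:R * cc N j.
Proof.
move=> h; apply: sqC.
have t := mul_bin_left N.-1 j.
have -> : (N - j.+1 = N.-1 - j)%N by lia.
nia.
Qed.

Lemma HAO_eq N : H_AO N = Ki N *m hAm N *m Kd N.
Proof.
apply/matrixP => i j; rewrite /Ki /Kd mul_diag_mx mul_mx_diag !mxE /hAf.
have hi := ltn_ord i; have hj := ltn_ord j.
case: (eqVneq (i : nat) j) => [e|ne].
  rewrite -e /dd mulrAC mulVf ?mul1r //.
  by rewrite cc_neq0.
case: (eqVneq (j : nat) i.+1) => [e|ne1].
  rewrite e -(mulKf (@cc_neq0 N i hi) (sqrtC _)) sq_up; last by lia.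
  by rewrite mulrA.
case: (eqVneq (i : nat) j.+1) => [e|ne2]; last by rewrite mulr0 mul0r.
rewrite e -(mulKf (@cc_neq0 N i hi) (sqrtC _)) e sq_dn; last by lia.
by rewrite mulrN mulNr mulrA.
Qed.

Lemma HBH_eq N : H_BH N = Ki N *m hBm N *m Kd N.
Proof.
apply/matrixP => i j; rewrite /Ki /Kd mul_diag_mx mul_mx_diag !mxE /hBf.
have hi := ltn_ord i; have hj := ltn_ord j.
case: (eqVneq (i : nat) j) => [e|ne].
  rewrite -e /dd mulrAC mulVf ?mul1r //.
  by rewrite cc_neq0.
case: (eqVneq (j : nat) i.+1) => [e|ne1].
  rewrite e -(mulKf (@cc_neq0 N i hi) (sqrtC _)) sq_up; last by lia.
  by rewrite mulrA.
case: (eqVneq (i : nat) j.+1) => [e|ne2]; last by rewrite mulr0 mul0r.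
rewrite e -(mulKf (@cc_neq0 N i hi) (sqrtC _)) e sq_dn; last by lia.
by rewrite mulrA.
Qed.

Lemma nSn n : (n == n.+1) = false. Proof. lia. Qed.
Lemma Snn n : (n.+1 == n) = false. Proof. lia. Qed.
Lemma nSSn n : (n == n.+2) = false. Proof. lia. Qed.
Lemma SSnn n : (n.+2 == n) = false. Proof. lia. Qed.

Lemma beta2 : beta^+2 + 2*beta + 2 = 0.
Proof.
rewrite /beta.
have -> : (-1 + 'i)^+2 + 2*(-1 + 'i) + 2 = 'i^+2 + 1 :> algC by ring.
by rewrite sqrCi addNr.
Qed.

Lemma beta_neq0 : beta != 0.
Proof.
apply/eqP => h; have := beta2; rewrite h expr0n /= mulr0 !add0r => /eqP.
by rewrite pnatr_eq0.
Qed.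

Lemma natB (a b : nat) : (b <= a)%N -> (a - b)%:R = a%:R - b%:R :> algC.
Proof. by move=> h; rewrite natrB. Qed.

Lemma natS (a : nat) : (a.+1)%:R = a%:R + 1 :> algC.
Proof. by rewrite -addn1 natrD. Qed.

Lemma comm_entry N i j : (i < N)%N -> (j < N)%N ->
  match i with
  | 0%N => 0
  | i'.+1 => hAf N i i' * (uu ^+ i' * 'C(j, i')%:R * beta ^+ j)
  end + hAf N i i * (uu ^+ i * 'C(j, i)%:R * beta ^+ j) +
  hAf N i i.+1 * (uu ^+ i.+1 * 'C(j, i.+1)%:R * beta ^+ j) =
  match j with
  | 0%N => 0
  | i'.+1 => uu ^+ i * 'C(i', i)%:R * beta ^+ i' * hBf N i' j
  end + uu ^+ i * 'C(j, i)%:R * beta ^+ j * hBf N j j +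
  uu ^+ i * 'C(j.+1, i)%:R * beta ^+ j.+1 * hBf N j.+1 j.
Proof.
move=> hi hj.
have hb := beta_neq0.
pose P := uu ^+ i * beta ^+ j.
pose I : algC := i%:R. pose J : algC := j%:R. pose Nn : algC := N%:R.
pose x : algC := ('C(j,i))%:R.
pose y : algC := if i is i'.+1 then ('C(j,i'))%:R else 0.
pose z : algC := ('C(j,i.+1))%:R.
pose w : algC := if j is j'.+1 then ('C(j',i))%:R else 0.
pose v : algC := ('C(j.+1,i))%:R.
have EY : match i with
  | 0%N => 0
  | i'.+1 => hAf N i i' * (uu ^+ i' * 'C(j, i')%:R * beta ^+ j)
  end = P * ((Nn - I) * beta * y).
  rewrite /P /I /y; case: (i) hi => [|i'] hi; first by rewrite !mulr0.
  rewrite /hAf nSn nSSn eqxx natB; last by lia.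
  rewrite exprS /uu; field; by rewrite ?oppr_eq0.
have EX : hAf N i i * (uu ^+ i * 'C(j, i)%:R * beta ^+ j) = P * (((2*I+1) - Nn) * x).
  rewrite /hAf eqxx /dd /P /I /x /Nn natrD natrM; ring.
have EZ : hAf N i i.+1 * (uu ^+ i.+1 * 'C(j, i.+1)%:R * beta ^+ j) =
   P * ((I+1) * (-beta)^-1 * z).
  rewrite /hAf Snn eqxx /P /I /z natS exprSr /uu; ring.
have EW : match j with
  | 0%N => 0
  | i'.+1 => uu ^+ i * 'C(i', i)%:R * beta ^+ i' * hBf N i' j
  end = P * (beta^-1 * J * w).
  rewrite /P /J /w; case: (j) hj => [|j'] hj; first by rewrite !mulr0.
  rewrite /hBf Snn eqxx exprS; field; by rewrite ?oppr_eq0.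
have EX2 : uu ^+ i * 'C(j, i)%:R * beta ^+ j * hBf N j j =
   P * (x * ((beta+1) * ((2*J+1) - Nn))).
  rewrite /hBf eqxx /dd /P /J /x /Nn natrD natrM /beta; ring.
have EV : uu ^+ i * 'C(j.+1, i)%:R * beta ^+ j.+1 * hBf N j.+1 j =
   P * (v * beta * (Nn - J - 1)).
  rewrite /hBf nSn nSSn eqxx natB; last by lia.
  rewrite /P /v /J /Nn natS exprSr; ring.
rewrite EY EX EZ EW EX2 EV -!mulrDr; congr (_ * _).
apply: alg1 => //.
- exact: beta2.
- rewrite /I /z /x /J; case: (leqP i j) => hij.
    have := congr1 (fun n => n%:R : algC) (mul_bin_left j i).
    by rewrite /= !natrM natB // natS.
  by rewrite !bin_small ?mulr0 //; lia.
- rewrite /w /J /x /I; case: (j) hj => [|j'] hj.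
    by case: (i) => [|i']; rewrite ?subrr ?mul0r ?mulr0 // bin0n /= mulr0.
  case: (leqP i j'.+1) => hij.
    have := congr1 (fun n => n%:R : algC) (mul_bin_down j'.+1 i).
    by rewrite /= !natrM natB.
  by rewrite !bin_small ?mulr0 //; lia.
- rewrite /v /x /y; case: (i) => [|i']; first by rewrite !bin0 addr0.
  by rewrite binS natrD addrC.
- rewrite /I /x /y /J; case: (i) => [|i']; first by rewrite mul0r mulr0.
  case: (leqP i' j) => hij.
    have := congr1 (fun n => n%:R : algC) (mul_bin_left j i').
    rewrite /= !natrM natB // natS => ->; congr (_ * _); ring.
  by rewrite !bin_small ?mulr0 //; lia.
Qed.

Lemma comm_hM N : hAm N *m Mm N = Mm N *m hBm N.
Proof.
apply/matrixP => i j; rewrite !mxE.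
have hi := ltn_ord i; have hj := ltn_ord j.
under eq_bigr do rewrite !mxE.
under [RHS]eq_bigr do rewrite !mxE.
rewrite (@tri_sum N (fun k => hAf N i k * (uu ^+ k * ('C(j,k))%:R * beta ^+ j)) i hi); last first.
- move=> e; rewrite (@bin_small j i.+1); last by lia.
  by rewrite mulr0n mulr0 mul0r mulr0.
- move=> k hk h1 h2 h3; rewrite /hAf (negbTE h1) (negbTE h2).
  have e3 : ((i:nat) == k.+1) = false by lia.
  by rewrite e3 mul0r.
rewrite [RHS](@tri_sum N (fun k => (uu ^+ i * ('C(k,i))%:R * beta ^+ k) * hBf N k j) j hj); last first.
- move=> e; rewrite /hBf nSn nSSn eqxx (_ : (N - j.+1 = 0)%N); last by lia.
  by rewrite mulr0n mulr0.
- move=> k hk h1 h2 h3; rewrite /hBf.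
  have e1 : ((j:nat) == k) = false by lia.
  have e2 : ((j:nat) == k.+1) = false by lia.
  have e3 : (k == (j:nat).+1) = false by lia.
  by rewrite e1 e2 e3 mulr0.
exact: comm_entry.
Qed.

Lemma sum2' N (x : algC) i q : (0 < N)%N -> (i <= N.-1)%N ->
  \sum_(k < N) ('C(k,i) * 'C(N.-1,k) * 'C(N.-1-k,q))%:R * x^+k =
  ('C(N.-1,i) * 'C(N.-1-i,q))%:R * x^+i * (x+1)^+(N.-1-i-q).
Proof. by case: N => // n _ /= h; apply: sum2. Qed.

Lemma SQ_eq N : (0 < N)%N -> Smx N *m Q_BH N = Q_AO N.
Proof.
move=> hN.
rewrite S_eq /Q_BH /Q_AO.
have -> : Dmx N = diag_mx (\row_(k<N) ('i^+k * cc N k)) :=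
  diagE N (fun k => 'i^+k * cc N k).
have -> : Cmx N = Kd N := diagE N (cc N).
have -> : Gmx N = diag_mx (\row_(k<N) ((-'i)^+(N-k-1) * ((N.-1-k)`!)%:R)) :=
  diagE N (fun k => (-'i)^+(N-k-1) * ((N.-1-k)`!)%:R).
have -> : Fmx N = diag_mx (\row_(k<N) ((-1)^+(N-k-1) * ((N.-1-k)`!)%:R)) :=
  diagE N (fun k => (-1)^+(N-k-1) * ((N.-1-k)`!)%:R).
have -> : forall (A B C D E F : 'M[algC]_N), A *m B *m C *m (D *m E *m F) = A *m (B *m (C *m D) *m E) *m F.
  by move=> A B C D E F; rewrite !mulmxA.
have -> : Kd N *m diag_mx (\row_(k<N) ('i^+k * cc N k)) =
    diag_mx (\row_(k<N) (('C(N.-1,k))%:R * 'i^+k)).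
  apply/matrixP => i j; rewrite /Kd mul_diag_mx !mxE.
  case: eqP => [->|]; rewrite ?mulr1n ?mulr0n ?mulr0 //.
  have h : cc N j ^+ 2 = ('C(N.-1, j))%:R by exact: sqrtCK.
  by rewrite -h; ring.
rewrite /Ki /Kd mul_mx_diag mul_diag_mx !mul_mx_diag mul_diag_mx.
apply/matrixP => i q; rewrite !mxE.
under eq_bigr do rewrite !mxE.
have hi := ltn_ord i.
rewrite (eq_bigr (fun k : 'I_N => uu^+i * ((('C(k,i) * 'C(N.-1,k) * 'C(N.-1-k,q))%:R) * (beta*'i)^+k)));
  last by move=> k _; rewrite !natrM exprMn; ring.
rewrite -mulr_sumr sum2' //; last by lia.
have hci := @cc_neq0 N i hi.
case: (leqP q (N.-1 - i)) => hq; last first.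
  rewrite (@bin_small (N.-1-i) q) // muln0 ?mulr0n; ring.
have hx : uu * (beta * 'i) = -'i.
  rewrite mulrA (_ : uu * beta = -1) ?mulN1r //.
  by rewrite /uu invrN mulNr mulVf // beta_neq0.
have hx1 : beta * 'i + 1 = -'i.
  rewrite /beta.
  have -> : (-1 + 'i) * 'i + 1 = -'i + ('i^+2 + 1) :> algC by ring.
  by rewrite sqrCi addNr addr0.
have E : uu ^+ i * (beta*'i)^+i = (-'i)^+i by rewrite -exprMn hx.
have E2 : (-'i)^+i * (-'i)^+(N.-1-i-q) * (-'i)^+(N-q-1) = (-1)^+(N-q-1) :> algC.
  rewrite -!exprD.
  have -> : (i + (N.-1 - i - q) + (N - q - 1) = 2 * (N - q - 1))%N by lia.
  by rewrite exprM sqrrN sqrCi.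
have h : cc N i ^+ 2 = ('C(N.-1, i))%:R by exact: sqrtCK.
rewrite hx1.
transitivity ((cc N i)^-1 * ('C(N.-1, i))%:R * ('C(N.-1 - i, q))%:R *
   ((-'i)^+i * (-'i)^+(N.-1-i-q) * (-'i)^+(N-q-1)) * (N.-1 - q)`!%:R).
  by rewrite natrM -E; ring.
rewrite E2 -h; field; exact: hci.
Qed.

Lemma diag_unit N (f : nat -> algC) : (forall k, (k < N)%N -> f k != 0) ->
  diag_mx (\row_(k < N) f k) \in unitmx.
Proof.
move=> hf; rewrite unitmxE det_diag unitfE.
rewrite prodf_seq_neq0; apply/allP => k _ /=; rewrite mxE; exact: hf.
Qed.

Lemma P_unit N : Pmx N \in unitmx.
Proof.
pose s := perm (@rev_ord_inj N).
have h : (col_perm s (Pmx N))^T \in unitmx.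
  rewrite unitmxE det_trig; last first.
    apply/is_trig_mxP => a b hab; rewrite !mxE permE /=.
    have := ltn_ord a; have := ltn_ord b => ha hb.
    rewrite bin_small //; lia.
  rewrite big1 ?unitr1 // => k _; rewrite !mxE permE /=.
  have := ltn_ord k => hk.
  by rewrite (_ : (N - k.+1 = N.-1 - k)%N) ?binn //; lia.
move: h; rewrite unitmx_tr col_permE unitmx_mul => /andP[] //.
Qed.

Lemma QAO_unit N : Q_AO N \in unitmx.
Proof.
rewrite /Q_AO !unitmx_mul P_unit andbT.
have -> : Cmx N = diag_mx (\row_(k<N) cc N k) := diagE N (cc N).
have -> : Fmx N = diag_mx (\row_(k<N) ((-1)^+(N-k-1) * ((N.-1-k)`!)%:R)) :=
  diagE N (fun k => (-1)^+(N-k-1) * ((N.-1-k)`!)%:R).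
apply/andP; split; [apply: (@diag_unit N (cc N)) => k hk; exact: cc_neq0|].
apply: (@diag_unit N (fun k => (-1)^+(N-k-1) * ((N.-1-k)`!)%:R)) => k hk.
by rewrite mulf_neq0 ?signr_eq0 // pnatr_eq0 -lt0n fact_gt0.
Qed.

Theorem mainTheorem3 (N : nat) (hN : (2 <= N)%N) :
  [/\ Smx N \in unitmx,
      H_AO N = Smx N *m H_BH N *m invmx (Smx N),
      Q_BH N \in unitmx
    & Smx N = Q_AO N *m invmx (Q_BH N)].
Proof.
have hSQ : Smx N *m Q_BH N = Q_AO N by apply: SQ_eq; lia.
have hU : Smx N *m Q_BH N \in unitmx by rewrite hSQ QAO_unit.
move: (hU); rewrite unitmx_mul => /andP[hS hQ].
have hcomm : H_AO N *m Smx N = Smx N *m H_BH N.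
  rewrite HAO_eq HBH_eq S_eq.
  have -> : Ki N *m hAm N *m Kd N *m (Ki N *m Mm N *m Kd N) =
     Ki N *m hAm N *m (Kd N *m Ki N) *m Mm N *m Kd N by rewrite !mulmxA.
  have -> : Ki N *m Mm N *m Kd N *m (Ki N *m hBm N *m Kd N) =
     Ki N *m Mm N *m (Kd N *m Ki N) *m hBm N *m Kd N by rewrite !mulmxA.
  rewrite KdKi !mulmx1 -(mulmxA (Ki N) (hAm N)) comm_hM !mulmxA //.
split => //.
  by rewrite -hcomm mulmxK.
by rewrite -hSQ mulmxK.
Qed.
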